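(* Let $V$ be a real Hilbert space, $W\subset V$ a subspace of finite dimension $m$, $\mathcal M\subset V$ a bounded set, and $Z_N\subset V$ a subspace of finite dimension $N$. Let $\widetilde W^\perp$ be the orthogonal complement of $W$ in $W+Z_N$, and set $\varepsilon_N:=\sup_{u\in\mathcal M}\operatorname{dist}(u,Z_N)$. Define, for $c\in W^\perp$ and linear $B:W\to W^\perp$, $$F(c,B)=\sup_{u\in\mathcal M}\|P_{W^\perp}u-c-B(P_Wu)\|,$$ and suppose $(\bar c,\bar B)$ minimizes $F$ over $\widetilde W^\perp\times\mathcal L(W,\widetilde W^\perp)$. Let $\widetilde A(w)=w+\bar c+\bar B w$. Then, with $E^*_{\mathrm{wca}}(\mathcal M):=\inf\{E_{\mathrm{wc}}(A,\mathcal M): A:W\to V\text{ affine}\}$, $$E^*_{\mathrm{wca}}(\mathcal M)\le E_{\mathrm{wc}}(\widetilde A,\mathcal M)\le E^*_{\mathrm{wca}}(\mathcal M)+\varepsilon_N.$$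
   Context: $P_W$, $P_{W^\perp}$ are orthogonal projections onto $W$ and its orthogonal complement $W^\perp$ in $V$. $\mathcal L(X,Y)$ denotes linear maps from $X$ to $Y$. For a map $A:W\to V$, $E_{\mathrm{wc}}(A,\mathcal M)=\sup\{\|u-A(P_Wu)\|:u\in\mathcal M\}$. $\operatorname{dist}(u,Z_N)=\inf_{z\in Z_N}\|u-z\|$. *)

(* Defs.v *)
From HB Require Import structures.
From mathcomp Require Import all_boot all_order all_algebra.
From mathcomp Require Import all_classical all_reals.
From mathcomp Require Import ereal topology normedtype.
Set Implicit Arguments. Unset Strict Implicit. Unset Printing Implicit Defensive.
Import Order.TTheory GRing.Theory Num.Theory.
Import numFieldNormedType.Exports.
Local Open Scope classical_set_scope.
Local Open Scope ring_scope.
Local Open Scope ereal_scope.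
Local Open Scope ring_scope.

Section Defs.
Variables (R : realType) (V : normedModType R).

Definition inner_product (ip : V -> V -> R) : Prop :=
  [/\ forall x y, ip x y = ip y x,
      forall a x y z, ip (a *: x + y) z = a * ip x z + ip y z
    & forall x, ip x x = `|x| ^+ 2].

Definition subspace (W : set V) : Prop :=
  [/\ W 0, forall x y, W x -> W y -> W (x + y)
    & forall (a : R) x, W x -> W (a *: x)].

Definition is_basis (n : nat) (W : set V) (e : 'I_n -> V) : Prop :=
  (forall w, W w <-> exists a : 'I_n -> R, w = \sum_(i < n) a i *: e i) /\
  (forall a : 'I_n -> R, \sum_(i < n) a i *: e i = 0 -> forall i, a i = 0).

Definition subspace_dim (W : set V) (n : nat) : Prop :=
  subspace W /\ exists e : 'I_n -> V, is_basis W e.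

Definition orth_compl (ip : V -> V -> R) (W : set V) : set V :=
  [set v | forall w, W w -> ip v w = 0].

Definition sum_space (W Z : set V) : set V :=
  [set v | exists w z, [/\ W w, Z z & v = w + z]].

Definition is_orth_proj (ip : V -> V -> R) (W : set V) (P : V -> V) : Prop :=
  forall u, W (P u) /\ orth_compl ip W (u - P u).

(* L : W -> X linear (represented as a map on V, only its values on W matter) *)
Definition linear_on (W X : set V) (L : V -> V) : Prop :=
  [/\ forall w, W w -> X (L w),
      forall w1 w2, W w1 -> W w2 -> L (w1 + w2) = L w1 + L w2
    & forall (a : R) w, W w -> L (a *: w) = a *: L w].

Definition affine_on (W : set V) (A : V -> V) : Prop :=
  exists (b : V) (L : V -> V), linear_on W setT L /\ forall w, W w -> A w = b + L w.

Definition bounded_set_V (M : set V) : Prop :=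
  exists r : R, forall u, M u -> `|u| <= r.

Definition dist (u : V) (Z : set V) : \bar R :=
  ereal_inf [set (`|u - z|)%:E | z in Z].

Definition Ewc (PW : V -> V) (A : V -> V) (M : set V) : \bar R :=
  ereal_sup [set (`|u - A (PW u)|)%:E | u in M].

Definition Ewca_star (W : set V) (PW : V -> V) (M : set V) : \bar R :=
  ereal_inf [set Ewc PW A M | A in affine_on W].

(* F(c, B) = sup_{u in M} |P_{W^perp} u - c - B (P_W u)|, with P_{W^perp} = id - P_W *)
Definition Fcost (PW : V -> V) (M : set V) (c : V) (B : V -> V) : \bar R :=
  ereal_sup [set (`|(u - PW u) - c - B (PW u)|)%:E | u in M].

End Defs.

(* Main.v *)
Require Import Defs.
From HB Require Import structures.
From mathcomp Require Import all_boot all_order all_algebra.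
From mathcomp Require Import all_classical all_reals.
From mathcomp Require Import ereal topology normedtype.
From mathcomp Require Import lra.
Import Order.TTheory GRing.Theory Num.Theory.
Import numFieldNormedType.Exports.
Local Open Scope classical_set_scope.
Local Open Scope ring_scope.
Set Implicit Arguments. Unset Strict Implicit.

Section Helpers.
Variables (R : realType) (V : normedModType R) (ip : V -> V -> R).
Hypothesis hip : inner_product ip.

Lemma ipC x y : ip x y = ip y x. Proof. by case: hip. Qed.
Lemma ipDZl a x y z : ip (a *: x + y) z = a * ip x z + ip y z.
Proof. by case: hip. Qed.
Lemma ipxx x : ip x x = `|x| ^+ 2. Proof. by case: hip. Qed.
Lemma ip0l z : ip 0 z = 0.
Proof. have := ipDZl 1 0 0 z; rewrite scale1r addr0 mul1r => h; lra. Qed.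
Lemma ipDl x y z : ip (x + y) z = ip x z + ip y z.
Proof. by have := ipDZl 1 x y z; rewrite scale1r mul1r. Qed.
Lemma ipZl a x z : ip (a *: x) z = a * ip x z.
Proof. by have := ipDZl a x 0 z; rewrite addr0 ip0l addr0. Qed.
Lemma ipNl x z : ip (- x) z = - ip x z.
Proof. by rewrite -scaleN1r ipZl mulN1r. Qed.
Lemma ipBl x y z : ip (x - y) z = ip x z - ip y z.
Proof. by rewrite ipDl ipNl. Qed.
Lemma ip0r z : ip z 0 = 0. Proof. by rewrite ipC ip0l. Qed.
Lemma ipDr x y z : ip z (x + y) = ip z x + ip z y.
Proof. by rewrite ipC ipDl !(ipC z). Qed.
Lemma ipZr a x z : ip z (a *: x) = a * ip z x.
Proof. by rewrite ipC ipZl ipC. Qed.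
Lemma ipBr x y z : ip z (x - y) = ip z x - ip z y.
Proof. by rewrite ipC ipBl !(ipC z). Qed.

Lemma pyth x y : ip x y = 0 -> `|x + y| ^+ 2 = `|x| ^+ 2 + `|y| ^+ 2.
Proof. move=> h; rewrite -!ipxx ipDl !ipDr (ipC y x) h; lra. Qed.

Lemma norm_le_pyth x y : ip x y = 0 -> `|x| <= `|x + y|.
Proof.
move=> h; have e := pyth h; have := normr_ge0 x; have := normr_ge0 (x + y).
have := sqr_ge0 `|y|; nra.
Qed.

Lemma ip_eq0 x : ip x x = 0 -> x = 0.
Proof. by rewrite ipxx => /eqP; rewrite sqrf_eq0 => /eqP /normr0_eq0. Qed.

Lemma sub_add (S : set V) x y : Defs.subspace S -> S x -> S y -> S (x + y).
Proof. by rewrite /Defs.subspace; case=> _ h _; apply: h. Qed.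
Lemma sub_scale (S : set V) a x : Defs.subspace S -> S x -> S (a *: x).
Proof. by rewrite /Defs.subspace; case=> _ _ h; apply: h. Qed.
Lemma sub_sub (S : set V) x y : Defs.subspace S -> S x -> S y -> S (x - y).
Proof.
move=> hS hx hy; apply: sub_add => //; rewrite -scaleN1r; exact: sub_scale.
Qed.

Lemma sub_sum (S : set V) n (f : 'I_n -> V) (a : 'I_n -> R) :
  Defs.subspace S -> (forall i, S (f i)) -> S (\sum_(i < n) a i *: f i).
Proof.
move=> hS hf; apply: big_ind.
- by move: hS; rewrite /Defs.subspace; case.
- by move=> x y; apply: sub_add.
- by move=> i _; apply: sub_scale.
Qed.

Definition lin (Q : V -> V) := forall a x y, Q (a *: x + y) = a *: Q x + Q y.

Lemma proj_seq (s : seq V) : exists Q : V -> V, lin Q /\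
  (forall x S, Defs.subspace S -> (forall v, v \in s -> S v) -> S (Q x)) /\
  (forall x v, v \in s -> ip (x - Q x) v = 0).
Proof.
elim: s => [|v s [Q [linQ [inQ orQ]]]].
  exists (fun _ => 0); split; first by move=> a x y; rewrite scaler0 addr0.
  by split=> // x S [].
have F2 y z : ip (y - Q y) (Q z) = 0.
  apply: (inQ z [set p | ip (y - Q y) p = 0]).
    split => /=; first exact: ip0r.
      by move=> p q hp hq; rewrite ipDr hp hq addr0.
    by move=> a p hp; rewrite ipZr hp mulr0.
  by move=> w hw; apply: orQ.
have [g hg] : exists g, g = v - Q v by exists (v - Q v).
have F3 w : w \in s -> ip g w = 0 by move=> hw; rewrite hg; apply: orQ.
have F4 z : ip g (Q z) = 0 by rewrite hg; apply: F2.
pose Q' := fun x => Q x + (ip x g / ip g g) *: g.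
exists Q'; split.
  move=> a x y; rewrite /Q' linQ ipDZl mulrDl scalerDl -mulrA -scalerA.
  by rewrite scalerDr addrACA.
split.
  move=> x S hS hs; apply: sub_add => //.
    by apply: inQ => // w hw; apply: hs; rewrite in_cons hw orbT.
  apply: sub_scale => //; rewrite hg; apply: sub_sub => //.
    by apply: hs; rewrite in_cons eqxx.
  by apply: inQ => // w hw; apply: hs; rewrite in_cons hw orbT.
move=> x w; rewrite in_cons => /orP [/eqP -> | hw]; last first.
  by rewrite /Q' opprD addrA ipBl ipZl (F3 w hw) orQ // mulr0 subr0.
have -> : x - Q' x = (x - Q x) - (ip x g / ip g g) *: g.
  by rewrite /Q' opprD addrA.
have -> : v = g + Q v by rewrite hg subrK.
have e1 := F2 x v; rewrite ipBl in e1.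
rewrite ipDr !ipBl !ipZl F4 mulr0 subr0 e1 addr0 (ipC (Q x) g) F4 subr0.
have [hgg|hgg] := eqVneq (ip g g) 0.
  by rewrite (ip_eq0 hgg) !ip0r mulr0 subr0.
by rewrite divfK // subrr.
Qed.

Lemma orth_sub x : Defs.subspace [set p | ip x p = 0].
Proof.
split => /=; first exact: ip0r.
  by move=> p q hp hq; rewrite ipDr hp hq addr0.
by move=> a p hp; rewrite ipZr hp mulr0.
Qed.

Lemma proj_sub (U : set V) (s : seq V) : Defs.subspace U ->
  (forall v, v \in s -> U v) ->
  (forall y, U y -> forall S, Defs.subspace S -> (forall v, v \in s -> S v) -> S y) ->
  exists Q, lin Q /\ (forall x, U (Q x)) /\ (forall x y, U y -> ip (x - Q x) y = 0).
Proof.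
move=> hU hs hspan; have [Q [lQ [iQ oQ]]] := proj_seq s.
exists Q; split=> //; split; first by move=> x; exact: iQ.
move=> x y hy; apply: (hspan y hy [set p | ip (x - Q x) p = 0]).
  exact: orth_sub.
by move=> v hv; apply: oQ.
Qed.

Section LinQ.
Variable Q : V -> V.
Hypothesis lQ : lin Q.
Lemma linQ0 : Q 0 = 0.
Proof. have := lQ 1 0 0; rewrite !scale1r addr0 => h.
by apply: (addrI (Q 0)); rewrite addr0 -h. Qed.
Lemma linD x y : Q (x + y) = Q x + Q y.
Proof. by have := lQ 1 x y; rewrite !scale1r. Qed.
Lemma linZ a x : Q (a *: x) = a *: Q x.
Proof. by have := lQ a x 0; rewrite addr0 linQ0 addr0. Qed.
Lemma linB x y : Q (x - y) = Q x - Q y.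
Proof. by rewrite linD -scaleN1r linZ scaleN1r. Qed.
End LinQ.

Section ProjQ.
Variables (U : set V) (Q : V -> V).
Hypotheses (hU : Defs.subspace U) (iQ : forall x, U (Q x))
  (oQ : forall x y, U y -> ip (x - Q x) y = 0).
Lemma Qfix y : U y -> Q y = y.
Proof.
move=> hy; apply/esym/eqP; rewrite -subr_eq0; apply/eqP/ip_eq0/oQ.
exact: sub_sub.
Qed.
Lemma Qle x : `|Q x| <= `|x|.
Proof.
have := @norm_le_pyth (Q x) (x - Q x); rewrite (addrC (Q x)) subrK; apply.
by rewrite ipC; apply: oQ.
Qed.
Lemma Qdist x z : U z -> `|x - Q x| <= `|x - z|.
Proof.
move=> hz; have := @norm_le_pyth (x - Q x) (Q x - z); rewrite addrA subrK; apply.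
by apply: oQ; apply: sub_sub.
Qed.
End ProjQ.

Lemma basis_in (W : set V) n (e : 'I_n -> V) : is_basis W e ->
  forall v, v \in map e (enum 'I_n) -> W v.
Proof.
move=> [hb _] v /mapP [i _ ->]; apply/hb; exists (fun j => (j == i)%:R).
rewrite (bigD1 i) //= eqxx scale1r big1 ?addr0 // => j /negbTE ->.
by rewrite scale0r.
Qed.

Lemma basis_span (W : set V) n (e : 'I_n -> V) : is_basis W e ->
  forall y, W y -> forall S, Defs.subspace S ->
  (forall v, v \in map e (enum 'I_n) -> S v) -> S y.
Proof.
move=> [hb _] y /hb [a ->] S hS hs; apply: sub_sum => // i; apply: hs.
by apply: map_f; exact: mem_enum.
Qed.

End Helpers.

Theorem mainTheorem3 (R : realType) (V : completeNormedModType R)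
  (ip : V -> V -> R) (W Z M : set V) (m N : nat) (PW : V -> V)
  (cbar : V) (Bbar : V -> V) :
  inner_product ip ->
  subspace_dim W m ->
  subspace_dim Z N ->
  bounded_set_V M ->
  is_orth_proj ip W PW ->
  let Wtperp := orth_compl ip W `&` sum_space W Z in
  Wtperp cbar -> linear_on W Wtperp Bbar ->
  (forall c B, Wtperp c -> linear_on W Wtperp B ->
     (Fcost PW M cbar Bbar <= Fcost PW M c B)%E) ->
  let Atilde := fun w => w + cbar + Bbar w in
  let epsN := ereal_sup [set dist u Z | u in M] in
  (Ewca_star W PW M <= Ewc PW Atilde M)%E /\
  (Ewc PW Atilde M <= Ewca_star W PW M + epsN)%E.
Proof.
move=> hip [sW [eW bW]] [sZ [eZ bZ]] [r hr] hPW Wt hc hB hmin At eps.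
split.
  apply: ereal_inf_lbound; exists At => //.
  exists cbar, (fun w => w + Bbar w); split; first split.
  - by [].
  - by move=> w1 w2 h1 h2; case: hB => _ hBD _; rewrite hBD // addrACA.
  - by move=> a w hw; case: hB => _ _ hBZ; rewrite hBZ // scalerDr.
  - by move=> w _; rewrite /At -addrA addrCA.
have [W0 WD WZ] := sW.
have [Z0 ZD ZZ] := sZ.
pose U := sum_space W Z.
have hU : Defs.subspace U.
  split.
  - by exists 0, 0; split => //; rewrite addr0.
  - move=> x y [w1 [z1 [h1 h2 ->]]] [w2 [z2 [h3 h4 ->]]].
    by exists (w1 + w2), (z1 + z2); split; [exact: WD|exact: ZD|rewrite addrACA].
  - move=> a x [w [z [h1 h2 ->]]].
    by exists (a *: w), (a *: z); split; [exact: WZ|exact: ZZ|rewrite scalerDr].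
have WU w : W w -> U w by move=> hw; exists w, 0; split => //; rewrite addr0.
have ZU z : Z z -> U z by move=> hz; exists 0, z; split => //; rewrite add0r.
have [QW [lW [iW oW]]] := proj_sub hip sW (basis_in bW) (basis_span bW).
have [QU [lU [iU oU]]] :
    exists Q, lin Q /\ (forall x, U (Q x)) /\ (forall x y, U y -> ip (x - Q x) y = 0).
  apply: (proj_sub hip hU (s := map eW (enum 'I_m) ++ map eZ (enum 'I_N))).
    move=> v; rewrite mem_cat => /orP [h|h].
      by apply: WU; exact: basis_in bW _ h.
    by apply: ZU; exact: basis_in bZ _ h.
  move=> y [w [z [hw hz ->]]] S hS hs; apply: sub_add => //.
    by apply: (basis_span bW hw) => // v hv; apply: hs; rewrite mem_cat hv.
  by apply: (basis_span bZ hz) => // v hv; apply: hs; rewrite mem_cat hv orbT.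
have hEA : Ewc PW At M = Fcost PW M cbar Bbar.
  rewrite /Ewc /Fcost; congr ereal_sup; apply: eq_imagel => u _.
  by rewrite /At !opprD !addrA.
have hdistU u : ((`|u - QU u|)%:E <= dist u Z)%E.
  apply: le_ereal_inf_tmp => _ [z hz <-]; rewrite lee_fin.
  by apply: (Qdist hip hU iU oU); apply: ZU.
have key A : affine_on W A -> (Fcost PW M cbar Bbar <= Ewc PW A M + eps)%E.
  move=> [b [L [hL hA]]].
  have [_ hLD hLZ] := hL.
  pose c' := QU (b - QW b).
  pose B' := fun w => QU (L w - QW (L w)).
  have orthW x : orth_compl ip W x -> orth_compl ip W (QU x).
    rewrite /orth_compl /= => hx w hw; have := oU x w (WU w hw).
    by rewrite (ipBl hip) hx // => h; lra.
  have hc' : Wt c'.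
    split; last exact: iU.
    by apply: orthW; rewrite /orth_compl /= => w hw; exact: oW.
  have hB' : linear_on W Wt B'.
    split.
    - move=> w _; split; last exact: iU.
      by apply: orthW; rewrite /orth_compl /= => w' hw'; exact: oW.
    - move=> w1 w2 h1 h2; rewrite /B' hLD // (linD lW) -(linD lU).
      by congr QU; rewrite opprD addrACA.
    - by move=> a w hw; rewrite /B' hLZ // (linZ lW) -scalerBr (linZ lU).
  apply: (le_trans (hmin c' B' hc' hB')).
  apply: ge_ereal_sup => _ [u hu <-].
  set w := PW u.
  have hw : W w := (hPW u).1.
  have hreal : `|u - w - c' - B' w| <= `|u - A w| + `|u - QU u|.
    rewrite (hA w hw).
    set a := b + L w.
    have e1 : c' + B' w = QU (a - QW a).
      by rewrite /c' /B' -(linD lU) /a (linD lW) opprD addrACA.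
    rewrite -addrA -opprD e1.
    set k := u - w - (a - QW a).
    have e2 : u - w - QU (a - QW a) = (u - QU u) + QU k.
      rewrite /k (linB lU (u - w)) (linB lU u w) (Qfix hip hU iU oU (WU w hw)).
      by rewrite !addrA subrK.
    rewrite e2; apply: (le_trans (ler_normD _ _)).
    rewrite [X in _ <= X]addrC lerD2l.
    apply: (le_trans (Qle hip iU oU k)).
    have hd : W (w - QW a) by apply: sub_sub => //.
    have := @norm_le_pyth _ _ _ hip k (w - QW a).
    have -> : k + (w - QW a) = u - a.
      by rewrite /k opprB addrACA subrK addrAC subrr add0r.
    apply; rewrite /k (ipBl hip).
    by rewrite ((hPW u).2 _ hd) (oW a _ hd) subrr.
  apply: (@le_trans _ _ ((`|u - A w| + `|u - QU u|)%:E)); first by rewrite lee_fin.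
  rewrite EFinD; apply: leeD.
    by apply: ereal_sup_ubound; exists u.
  by apply: (le_trans (hdistU u)); apply: ereal_sup_ubound; exists u.
rewrite hEA; apply: ge_ereal_sup => _ [u hu <-].
have hy : ((`|u - PW u - cbar - Bbar (PW u)|)%:E <= Fcost PW M cbar Bbar)%E.
  by apply: ereal_sup_ubound; exists u.
have hdist0 v : (0%:E <= dist v Z)%E.
  by apply: le_ereal_inf_tmp => _ [z _ <-]; rewrite lee_fin.
have heps0 : (0%:E <= eps)%E.
  by apply: (le_trans (hdist0 u)); apply: ereal_sup_ubound; exists u.
have hepsr : (eps <= r%:E)%E.
  apply: ge_ereal_sup => _ [v hv <-].
  apply: (@le_trans _ _ (`|v - 0|)%:E).
    by apply: ereal_inf_lbound; exists 0.
  by rewrite subr0 lee_fin; apply: hr.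
have epsfin : eps \is a fin_num.
  by rewrite ge0_fin_numE //; apply: (le_lt_trans hepsr); exact: ltry.
rewrite -leeBlDr //; apply: le_ereal_inf_tmp => _ [A hA <-].
by rewrite leeBlDr //; apply: (le_trans hy (key A hA)).
Qed.
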